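(* Let $N\ge1$, let $\mathcal{L}_e$ be a finite index set of size $L_e$, for each $\ell\in\mathcal{L}_e$ let $\mathbf{a}_\ell\in\mathbb{R}^N$, $r_\ell>0$, $x_\ell>0$, and let $L$ be a positive integer. For $\mathbf{b}\in\mathbb{R}^{L_e}$ set $\mathbf{R}^{-1}(\mathbf{b})=\frac12\sum_{\ell}\frac{b_\ell}{r_\ell}\mathbf{a}_\ell\mathbf{a}_\ell^\top$, $\mathbf{X}^{-1}(\mathbf{b})=\frac12\sum_\ell\frac{b_\ell}{x_\ell}\mathbf{a}_\ell\mathbf{a}_\ell^\top$ and, when these are invertible, $$\boldsymbol{\Sigma}(\mathbf{b})=\mathbf{R}(\mathbf{b})\boldsymbol{\Sigma}_p\mathbf{R}(\mathbf{b})+\mathbf{X}(\mathbf{b})\boldsymbol{\Sigma}_q\mathbf{X}(\mathbf{b})+\mathbf{R}(\mathbf{b})\boldsymbol{\Sigma}_{pq}\mathbf{X}(\mathbf{b})+\mathbf{X}(\mathbf{b})\boldsymbol{\Sigma}_{pq}^\top\mathbf{R}(\mathbf{b})+\sigma_n^2\mathbf{I}_N,$$ where $\sigma_n^2\ge0$ and $\boldsymbol{\Sigma}_p,\boldsymbol{\Sigma}_q,\boldsymbol{\Sigma}_{pq}\in\mathbb{R}^{N\times N}$ are such that $\begin{bmatrix}\boldsymbol{\Sigma}_p&\boldsymbol{\Sigma}_{pq}\\ \boldsymbol{\Sigma}_{pq}^\top&\boldsymbol{\Sigma}_q\end{bmatrix}$ is symmetric positive semidefinite (a joint covariance matrix).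 Let $f(\mathbf{b})=\log|\boldsymbol{\Sigma}(\mathbf{b})|+\operatorname{trace}(\boldsymbol{\Sigma}^{-1}(\mathbf{b})\hat{\boldsymbol{\Sigma}})$, defined (finite) at those $\mathbf{b}$ for which $\mathbf{R}(\mathbf{b}),\mathbf{X}(\mathbf{b})$ exist and $\boldsymbol{\Sigma}(\mathbf{b})\succ0$. Let $\mathbf{b}_o\in\{0,1\}^{L_e}$ with $\mathbf{1}^\top\mathbf{b}_o=L$ be such that $f(\mathbf{b}_o)$ is defined (the true line indicator vector), and suppose $\hat{\boldsymbol{\Sigma}}=\boldsymbol{\Sigma}(\mathbf{b}_o)$. Then $\nabla f(\mathbf{b}_o)=\mathbf{0}$, and $\mathbf{b}_o$ is a global minimizer of $f$ both over $\{\mathbf{b}\in\{0,1\}^{L_e}:\mathbf{1}^\top\mathbf{b}=L\}$ and over $\{\mathbf{b}\in[0,1]^{L_e}:\mathbf{1}^\top\mathbf{b}=L\}$ (among the points where $f$ is defined).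
   Context: $|\cdot|$ is the determinant; $\mathbf{1}$ is the all-ones vector. $\mathbf{b}$ is the indicator vector of energized lines among the existing lines $\mathcal{L}_e$ of a distribution grid, $\mathbf{a}_\ell^\top$ are rows of its reduced incidence matrix, and $\hat{\boldsymbol{\Sigma}}$ plays the role of the sample covariance of differential squared-voltage magnitudes, here assumed to have converged to the ensemble covariance. *)

(* Defs.v *)
From HB Require Import structures.
From mathcomp Require Import all_boot all_order all_algebra.
From mathcomp Require Import all_classical all_reals all_analysis.
Set Implicit Arguments. Unset Strict Implicit. Unset Printing Implicit Defensive.
Import Order.TTheory GRing.Theory Num.Theory.
Local Open Scope ring_scope.

Section Defs.
Variables (R : realType).

Definition psd_mx n (M : 'M[R]_n) : Prop :=
  M^T = M /\ forall v : 'rV[R]_n, 0 <= (v *m M *m v^T) 0 0.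
Definition pd_mx n (M : 'M[R]_n) : Prop :=
  M^T = M /\ forall v : 'rV[R]_n, v != 0 -> 0 < (v *m M *m v^T) 0 0.

Variables (N Le : nat) (a : 'I_Le -> 'cV[R]_N) (r x : 'I_Le -> R)
  (Sp Sq Spq : 'M[R]_N) (sn2 : R).

Definition Rinv_b (b : 'rV[R]_Le) : 'M[R]_N :=
  2^-1 *: \sum_(l < Le) (b 0 l / r l) *: (a l *m (a l)^T).
Definition Xinv_b (b : 'rV[R]_Le) : 'M[R]_N :=
  2^-1 *: \sum_(l < Le) (b 0 l / x l) *: (a l *m (a l)^T).

Definition Sigma_b (b : 'rV[R]_Le) : 'M[R]_N :=
  let Rb := invmx (Rinv_b b) in let Xb := invmx (Xinv_b b) in
  Rb *m Sp *m Rb + Xb *m Sq *m Xb + Rb *m Spq *m Xb + Xb *m Spq^T *m Rb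
  + sn2%:M.

Definition f_defined (b : 'rV[R]_Le) : Prop :=
  Rinv_b b \in unitmx /\ Xinv_b b \in unitmx /\ pd_mx (Sigma_b b).

(* f(b) = log|Sigma(b)| + tr(Sigma(b)^{-1} Shat); value 0 where undefined
   (only used on the domain, or for derivatives at interior points). *)
Definition f_obj (Shat : 'M[R]_N) (b : 'rV[R]_Le) : R :=
  if `[< f_defined b >] then ln (\det (Sigma_b b)) + \tr (invmx (Sigma_b b) *m Shat)
  else 0.

End Defs.

(* Main.v *)
Require Import Defs.
From HB Require Import structures.
From mathcomp Require Import all_boot all_order all_algebra.
From mathcomp Require Import all_classical all_reals all_analysis.
Import Order.TTheory GRing.Theory Num.Theory.
Local Open Scope ring_scope.
From mathcomp Require Import ring lra.

Module Helpers.
Import numFieldNormedType.Exports.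
Set Implicit Arguments. Unset Strict Implicit.
Section Alg.
Variable R : realType.

Lemma pd_congr n (S C : 'M[R]_n) : pd_mx S -> C \in unitmx -> pd_mx (C *m S *m C^T).
Proof.
move=> [sS pS] uC; split.
  by rewrite !trmx_mul trmxK sS mulmxA.
move=> v v0.
have -> : v *m (C *m S *m C^T) *m v^T = (v *m C) *m S *m (v *m C)^T.
  by rewrite trmx_mul !mulmxA.
apply: pS; apply: contra v0 => /eqP vC0.
by rewrite -(mulmxK uC v) vC0 mul0mx.
Qed.

Lemma pd_unit n (S : 'M[R]_n) : pd_mx S -> S \in unitmx.
Proof.
move=> [sS pS]; case: (boolP (S \in unitmx)) => // /negP nU; exfalso.
Abort.

End Alg.
Section Alg2.
Variable R : realType.

Lemma mx11E (A : 'M[R]_1) : A = (A 0 0)%:M.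
Proof. exact: mx11_scalar. Qed.

Lemma schur n (S : 'M[R]_(1 + n)) : pd_mx S ->
  let p := ulsubmx S 0 0 in let u := ursubmx S in
  let Q := drsubmx S - p^-1 *: (u^T *m u) in
  let L : 'M[R]_(1 + n) := block_mx 1%:M 0 (p^-1 *: u^T) 1%:M in
  [/\ 0 < p, pd_mx Q, \det L = 1 & S = L *m block_mx p%:M 0 0 Q *m L^T].
Proof.
move=> [sS pS] p u Q L.
have dlu : dlsubmx S = u^T by rewrite /u trmx_ursub sS.
have ulp : ulsubmx S = p%:M by rewrite [LHS]mx11E.
have SE : S = block_mx p%:M u u^T (drsubmx S) by rewrite -ulp -dlu submxK.
have p0 : 0 < p.
  have := pS (row_mx 1%:M 0).
  rewrite {1}SE mul_row_block tr_row_mx mul_row_col !mul0mx !addr0 !mul1mx trmx1 mulmx1.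
  rewrite trmx0 mulmx0 addr0 mxE eqxx mulr1n; apply.
  apply/negP => /eqP/(congr1 lsubmx); rewrite row_mxKl linear0 => /matrixP/(_ 0 0).
  by rewrite !mxE /= mulr1n => /eqP; rewrite oner_eq0.
have dL : \det L = 1 by rewrite /L det_lblock !det1 mulr1.
have SL : S = L *m block_mx p%:M 0 0 Q *m L^T.
  rewrite /L tr_block_mx !trmx1 trmx0 linearZ /= trmxK !mulmx_block.
  rewrite !mul0mx !mulmx0 !mul1mx !mulmx1 !addr0 !add0r.
  rewrite mul_scalar_mx mul_mx_scalar !scalerA mulfV ?gt_eqF // !scale1r.
  by rewrite -scalemxAr /Q addrC subrK -SE.
split => //.
have uL : L \in unitmx by rewrite unitmxE dL unitr1.
have E : invmx L *m S *m (invmx L)^T = block_mx p%:M 0 0 Q.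
  rewrite {1}SL !mulmxA mulVmx // mul1mx -mulmxA -trmx_mul mulVmx // trmx1 mulmx1 //.
have pdD : pd_mx (invmx L *m S *m (invmx L)^T).
  by apply: pd_congr; rewrite ?unitmx_inv.
rewrite E in pdD.
case: pdD => sD pD; split.
  by have := congr1 drsubmx sD; rewrite tr_block_mx !block_mxKdr.
move=> w w0; have := pD (row_mx 0 w).
rewrite mul_row_block tr_row_mx mul_row_col !mul0mx !mulmx0 !add0r mul0mx add0r; apply.
apply: contra w0 => /eqP/(congr1 rsubmx); rewrite row_mxKr linear0 => ->//.
Qed.

End Alg2.
Section Alg3.
Variable R : realType.

Lemma chol n (S : 'M[R]_n) : pd_mx S -> exists C, C \in unitmx /\ S = C *m C^T.
Proof.
elim: n S => [|n IH] S pS.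
  exists 1%:M; split; first exact: unitmx1.
  by apply/matrixP => [[]].
pose S' : 'M[R]_(1 + n) := S.
have pS' : pd_mx S' := pS.
suff [C [uC SC]] : exists C : 'M[R]_(1+n), C \in unitmx /\ S' = C *m C^T by exists C.
move: (schur pS') => /=.
set p := ulsubmx S' 0 0; set u := ursubmx S'.
set Q := drsubmx S' - _; set L := block_mx _ _ _ _.
move=> [p0 pQ dL SL].
have [C' [uC' QC]] := IH _ pQ.
exists (L *m block_mx (Num.sqrt p)%:M 0 0 C'); split.
  rewrite unitmx_mul unitmxE dL unitr1 /= unitmxE det_lblock det_scalar1.
  by rewrite unitrM unitfE gt_eqF ?sqrtr_gt0 //= -unitmxE.
rewrite trmx_mul -mulmxA [X in L *m X]mulmxA tr_block_mx mulmx_block trmx0 !mulmx0 !mul0mx.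
rewrite !addr0 !add0r tr_scalar_mx -scalar_mxM -expr2 sqr_sqrtr ?ltW // -QC.
by rewrite trmx0 mulmx0 mulmxA.
Qed.

Lemma ln_le_sub1 (y : R) : 0 < y -> ln y <= y - 1.
Proof.
move=> y0; have := expR_ge1Dx (ln y); rewrite lnK ?posrE //.
by rewrite lerBrDl addrC.
Qed.

Lemma logdet_le n (P : 'M[R]_n) : pd_mx P -> 0 < \det P /\ ln (\det P) <= \tr P - n%:R.
Proof.
elim: n P => [|n IH] P pP.
  rewrite det_mx00 ln1 [P]flatmx0 mxtrace0 subrr; split => //; exact: ltr01.
pose S' : 'M[R]_(1 + n) := P.
have pS' : pd_mx S' := pP.
suff : 0 < \det S' /\ ln (\det S') <= \tr S' - n.+1%:R by [].
move: (schur pS') => /=.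
set p := ulsubmx S' 0 0; set u := ursubmx S'.
set Q := drsubmx S' - _; set L := block_mx _ _ _ _.
move=> [p0 pQ dL SL].
have [dQ lQ] := IH _ pQ.
have dS : \det S' = p * \det Q.
  by rewrite {1}SL !det_mulmx det_tr dL det_lblock det_scalar1 mul1r mulr1.
have tS : \tr S' = p + \tr Q + p^-1 * \tr (u^T *m u).
  rewrite -[in LHS](submxK S') mxtrace_block trace_mx11 -/p.
  by rewrite -mxtraceZ -addrA -mxtraceD /Q subrK.
have t0 : 0 <= p^-1 * \tr (u^T *m u).
  apply: mulr_ge0; first by rewrite invr_ge0 ltW.
  rewrite mxtrace_mulC trace_mx11 !mxE.
  by apply: sumr_ge0 => j _; rewrite [u^T _ _]mxE -expr2 sqr_ge0.
rewrite dS tS; split; first exact: mulr_gt0.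
rewrite lnM ?posrE // -natr1.
have := ln_le_sub1 p0; lra.
Qed.

End Alg3.
Section Alg4.
Variable R : realType.

Lemma pd_unit n (S : 'M[R]_n) : pd_mx S -> S \in unitmx.
Proof. by move=> /logdet_le [d0 _]; rewrite unitmxE unitfE gt_eqF. Qed.

Lemma key n (S T : 'M[R]_n) : pd_mx S -> pd_mx T ->
  ln (\det T) + n%:R <= ln (\det S) + \tr (invmx S *m T).
Proof.
move=> pS pT; have [C [uC SC]] := chol pS.
have uS := pd_unit pS.
pose P := invmx C *m T *m (invmx C)^T.
have pP : pd_mx P by apply: pd_congr; rewrite ?unitmx_inv.
have TP : T = C *m P *m C^T.
  by rewrite /P !mulmxA mulmxV // mul1mx -mulmxA -trmx_mul mulmxV // trmx1 mulmx1.
have dT : \det T = \det S * \det P.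
  by rewrite {1}TP SC !det_mulmx !det_tr mulrAC mulrA.
have trT : \tr (invmx S *m T) = \tr P.
  have e1 : invmx S *m C = invmx C^T.
    have : invmx S *m C *m C^T = 1%:M by rewrite -mulmxA -SC mulVmx.
    move=> /(congr1 (mulmx^~ (invmx C^T))).
    by rewrite mulmxK ?unitmx_tr // mul1mx.
  have e2 : C^T *m invmx S *m C = 1%:M by rewrite -mulmxA e1 mulmxV ?unitmx_tr.
  clearbody P; rewrite TP !mulmxA mxtrace_mulC !mulmxA e2 mul1mx //.
have [dS _] := logdet_le pS.
have [dP lP] := logdet_le pP.
rewrite dT trT lnM ?posrE // -addrA lerD2l -lerBrDr //.
Qed.

End Alg4.
Section Alg5.
Variable R : realType.

Lemma quad_expand n (M : 'M[R]_n) (v w : 'rV_n) (s : R) : M^T = M ->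
  ((v + s *: w) *m M *m (v + s *: w)^T) 0 0 =
  (v *m M *m v^T) 0 0 + 2 * s * (w *m M *m v^T) 0 0 + s ^+ 2 * (w *m M *m w^T) 0 0.
Proof.
move=> sM.
have e : (v *m M *m w^T) 0 0 = (w *m M *m v^T) 0 0.
  by rewrite -[LHS]trace_mx11 -mxtrace_tr !trmx_mul trmxK sM mulmxA trace_mx11.
rewrite linearD /= linearZ /= !mulmxDl !mulmxDr -!scalemxAl -!scalemxAr !mxE.
move: e; rewrite !mxE => ->; ring.
Qed.

Lemma psd_unit_pd n (M : 'M[R]_n) : M^T = M -> (forall v : 'rV_n, 0 <= (v *m M *m v^T) 0 0) ->
  M \in unitmx -> pd_mx M.
Proof.
move=> sM pM uM; split => // v v0; rewrite lt_def pM andbT.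
apply/negP => /eqP q0.
have Mv : M *m v^T = 0.
  apply/matrixP => i j; rewrite (ord1 j) [RHS]mxE.
  pose w : 'rV[R]_n := delta_mx 0 i.
  have ci : (w *m M *m v^T) 0 0 = (M *m v^T) i 0.
    by rewrite /w -rowE -row_mul mxE.
  rewrite -ci; set c := (w *m M *m v^T) 0 0.
  set d := (w *m M *m w^T) 0 0.
  have d0 : 0 <= d by apply: pM.
  pose s := - c / (d + 1).
  have := pM (v + s *: w); rewrite quad_expand // q0 add0r -/c -/d => h.
  have hs : s * (d + 1) = - c by rewrite /s mulrVK // unitfE gt_eqF // ltr_wpDl.
  nra.
have : v^T = 0 by rewrite -(mulKmx uM v^T) Mv mulmx0.
by move/(congr1 trmx); rewrite trmxK trmx0 => v00; rewrite v00 eqxx in v0.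
Qed.

End Alg5.
Section Cv.
Variables (R : realType) (T : Type) (G : set_system T).
Context {FG : Filter G}.

Definition mcv m n (F : T -> 'M[R]_(m, n)) (A : 'M[R]_(m, n)) :=
  forall i j, (F t i j @[t --> G] --> A i j)%classic.

Lemma cvg_bsum (I : Type) (r : seq I) (P : pred I) (f : I -> T -> R) (a : I -> R) :
  (forall i, P i -> (f i t @[t --> G] --> a i)%classic) ->
  ((\sum_(i <- r | P i) f i t) @[t --> G] --> \sum_(i <- r | P i) a i)%classic.
Proof. by move=> h; apply: cvg_big => //; exact: add_continuous. Qed.

Lemma cvg_bprod (I : Type) (r : seq I) (P : pred I) (f : I -> T -> R) (a : I -> R) :
  (forall i, P i -> (f i t @[t --> G] --> a i)%classic) ->
  ((\prod_(i <- r | P i) f i t) @[t --> G] --> \prod_(i <- r | P i) a i)%classic.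
Proof. by move=> h; apply: cvg_big => //; exact: mul_continuous. Qed.

Lemma mcv_cst m n (A : 'M[R]_(m, n)) : mcv (fun=> A) A.
Proof. by move=> i j; exact: cvg_cst. Qed.

Lemma mcv_add m n F H (A B : 'M[R]_(m, n)) : mcv F A -> mcv H B -> mcv (fun t => F t + H t) (A + B).
Proof.
move=> hF hH i j; rewrite mxE.
have e : (fun t => (F t + H t) i j) = (fun t => F t i j + H t i j) by apply: funext => t; rewrite mxE.
by rewrite e; exact: (cvgD (hF i j) (hH i j)).
Qed.

Lemma mcv_opp m n F (A : 'M[R]_(m, n)) : mcv F A -> mcv (fun t => - F t) (- A).
Proof.
move=> hF i j; rewrite mxE.
have e : (fun t => (- F t) i j) = (fun t => - F t i j) by apply: funext => t; rewrite mxE.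
by rewrite e; exact: (cvgN (hF i j)).
Qed.

Lemma mcv_scale m n (c : T -> R) (c0 : R) F (A : 'M[R]_(m, n)) :
  (c t @[t --> G] --> c0)%classic -> mcv F A -> mcv (fun t => c t *: F t) (c0 *: A).
Proof.
move=> hc hF i j; rewrite mxE.
have e : (fun t => (c t *: F t) i j) = (fun t => c t * F t i j) by apply: funext => t; rewrite mxE.
by rewrite e; exact: (cvgM hc (hF i j)).
Qed.

Lemma mcv_mul m n p F H (A : 'M[R]_(m, n)) (B : 'M[R]_(n, p)) :
  mcv F A -> mcv H B -> mcv (fun t => F t *m H t) (A *m B).
Proof.
move=> hF hH i j; rewrite mxE.
have e : (fun t => (F t *m H t) i j) = (fun t => \sum_k F t i k * H t k j)
  by apply: funext => t; rewrite mxE.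
rewrite e; apply: cvg_bsum => k _; exact: (cvgM (hF i k) (hH k j)).
Qed.

Lemma mcv_tr m n F (A : 'M[R]_(m, n)) : mcv F A -> mcv (fun t => (F t)^T) A^T.
Proof.
move=> hF i j; rewrite mxE.
have e : (fun t => (F t)^T i j) = (fun t => F t j i) by apply: funext => t; rewrite mxE.
by rewrite e.
Qed.

Lemma mcv_det n F (A : 'M[R]_n) : mcv F A -> ((\det (F t)) @[t --> G] --> \det A)%classic.
Proof.
move=> hF; rewrite /determinant; apply: cvg_bsum => s _.
apply: cvgM; first exact: cvg_cst.
by apply: cvg_bprod => i _; exact: hF.
Qed.

Lemma mcv_tr_cvg n F (A : 'M[R]_n) : mcv F A -> ((\tr (F t)) @[t --> G] --> \tr A)%classic.
Proof. by move=> hF; apply: cvg_bsum => i _; exact: hF. Qed.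

Lemma mcv_adj n F (A : 'M[R]_n) : mcv F A -> mcv (fun t => \adj (F t)) (\adj A).
Proof.
move=> hF i j; rewrite mxE.
have e : (fun t => (\adj (F t)) i j) = (fun t => cofactor (F t) j i)
  by apply: funext => t; rewrite mxE.
rewrite e /cofactor; apply: cvgM; first exact: cvg_cst.
apply: mcv_det => k l; rewrite !mxE.
have e2 : (fun t => (row' j (col' i (F t))) k l) = (fun t => F t (lift j k) (lift i l))
  by apply: funext => t; rewrite !mxE.
by rewrite e2.
Qed.

Lemma mcv_inv n F (A : 'M[R]_n) : mcv F A -> A \in unitmx -> mcv (fun t => invmx (F t)) (invmx A).
Proof.
move=> hF uA.
have hd := mcv_det hF.
have dA : \det A != 0 by rewrite -unitfE -unitmxE.
have nz : \forall t \near G, \det (F t) != 0 by exact: cvgr_neq0 hd dA.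
have hs : mcv (fun t => (\det (F t))^-1 *: \adj (F t)) ((\det A)^-1 *: \adj A).
  apply: mcv_scale; last exact: mcv_adj.
  exact: cvgV.
move=> i j.
have -> : invmx A = (\det A)^-1 *: \adj A by rewrite /invmx uA.
apply: cvg_trans (hs i j).
apply: near_eq_cvg; near=> t.
have ut : F t \in unitmx by rewrite unitmxE unitfE; near: t.
by rewrite /invmx ut.
Unshelve. all: by end_near.
Qed.

End Cv.
Section Sig.
Variables (R : realType) (N : nat) (Sp Sq Spq : 'M[R]_N) (sn2 : R).
Definition Fm (Rm Xm : 'M[R]_N) := Rm *m Sp *m Rm + Xm *m Sq *m Xm + Rm *m Spq *m Xm + Xm *m Spq^T *m Rm + sn2%:M.

Hypotheses (hB : psd_mx (block_mx Sp Spq Spq^T Sq)) (hs : 0 <= sn2).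

Lemma sSp : Sp^T = Sp.
Proof. by have := congr1 ulsubmx hB.1; rewrite tr_block_mx !block_mxKul. Qed.
Lemma sSq : Sq^T = Sq.
Proof. by have := congr1 drsubmx hB.1; rewrite tr_block_mx !block_mxKdr. Qed.

Lemma Fm_sym Rm Xm : Rm^T = Rm -> Xm^T = Xm -> (Fm Rm Xm)^T = Fm Rm Xm.
Proof.
move=> hR hX; rewrite /Fm !linearD /= !trmx_mul !trmxK tr_scalar_mx hR hX sSp sSq !mulmxA.
congr (_ + _); rewrite -addrA [X in _ + X]addrC addrA //.
Qed.

Lemma Fm_psd Rm Xm : Rm^T = Rm -> Xm^T = Xm -> forall v : 'rV_N, 0 <= (v *m Fm Rm Xm *m v^T) 0 0.
Proof.
move=> hR hX v.
pose w := row_mx (v *m Rm) (v *m Xm).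
have -> : v *m Fm Rm Xm *m v^T = w *m block_mx Sp Spq Spq^T Sq *m w^T + sn2 *: (v *m v^T).
  rewrite /w mul_row_block tr_row_mx mul_row_col !trmx_mul hR hX /Fm.
  rewrite !mulmxDl !mulmxDr !mulmxA mul_mx_scalar !mulmxDl -scalemxAl.
  congr (_ + _); set a := _ *m v^T; set b := _ *m v^T; set c := _ *m v^T; set d := _ *m v^T.
  by rewrite [c + b]addrC -!addrA; congr (_ + _); rewrite addrA addrC.
rewrite mxE [X in _ + X]mxE; apply: addr_ge0; first exact: hB.2.
rewrite mulr_ge0 // mxE; apply: sumr_ge0 => j _; rewrite [v^T _ _]mxE -expr2 sqr_ge0 //.
Qed.
End Sig.
Section Der.
Variable R : realType.

Lemma deriv0Q (h m : R -> R) :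
  (\forall t \near (0:R), 0 <= h t - h 0 <= t * m t) ->
  (m t @[t --> (0:R)] --> (0:R))%classic ->
  ((t^-1 *: ((h \o shift 0) (t *: 1) - h 0)) @[t --> (0:R)^'] --> (0:R))%classic.
Proof.
move=> H hm.
  have hm0 : (m t @[t --> (0:R)^'] --> (0:R))%classic.
    apply: (cvg_trans _ hm); apply: cvg_app; exact: nbhs_dnbhs.
  have hm' := cvg_norm hm0; rewrite normr0 in hm'.
  have {}hm' := hm' (dnbhs_filter _).
  have hm'' : (- `|m t| @[t --> (0:R)^'] --> (0:R))%classic.
    by have := cvgN hm'; rewrite oppr0; apply.
  apply: (squeeze_cvgr _ hm'' hm').
  have H' : \forall t \near ((0:R)^')%classic, 0 <= h t - h 0 <= t * m t by exact: nbhs_dnbhs.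
  near=> t.
  have t0 : t != 0 by near: t; exact: nbhs_dnbhs_neq.
  have [h1 h2] : 0 <= h t - h 0 /\ h t - h 0 <= t * m t by apply/andP; near: t.
  rewrite /= /shift addr0.
  change (t%:A) with (t * 1); rewrite mulr1.
  change (t^-1 *: (h t - h 0)) with (t^-1 * (h t - h 0)).
  rewrite -ler_norml normrM normfV.
  have dn : `|h t - h 0| <= `|t| * `|m t|.
    rewrite -normrM [`|h t - h 0|]ger0_norm //; apply: (le_trans h2); exact: ler_norm.
  have tp : 0 < `|t| by rewrite normr_gt0.
  rewrite -(ler_pM2l tp) mulrA mulfV ?normr_eq0 // mul1r //.
Unshelve. all: by end_near.
Qed.
Lemma deriv0 (h m : R -> R) :
  (\forall t \near (0:R), 0 <= h t - h 0 <= t * m t) ->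
  (m t @[t --> (0:R)] --> (0:R))%classic -> is_derive (0:R) (1:R) h 0.
Proof.
move=> H hm; have Q := deriv0Q H hm.
split; [exact: cvgP Q | exact: cvg_lim Q].
Qed.
End Der.
Lemma zlem (V : zmodType) (a b c : V) : a - b - (a + c) = - (b + c).
Proof. by rewrite opprD addrACA subrr add0r opprD. Qed.

Lemma bil (R : realType) N (t : R) (P P0 Q Q0 dP dQ M : 'M[R]_N) :
  P = P0 - t *: dP -> Q0 = Q + t *: dQ ->
  P *m M *m Q - P0 *m M *m Q0 = - (t *: (dP *m M *m Q + P0 *m M *m dQ)).
Proof.
move=> -> ->; rewrite mulmxBl mulmxBl mulmxDr -!scalemxAl -!scalemxAr scalerDr.
exact: zlem.
Qed.

Lemma inv_diff (R : realType) N (t : R) (A0 B : 'M[R]_N) :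
  A0 \in unitmx -> (A0 + t *: B) \in unitmx ->
  invmx (A0 + t *: B) = invmx A0 - t *: (invmx (A0 + t *: B) *m B *m invmx A0).
Proof.
move=> u0 ut; set Rt := invmx (A0 + t *: B).
have e : Rt *m (A0 - (A0 + t *: B)) *m invmx A0 = Rt - invmx A0.
  by rewrite mulmxBr mulmxBl mulmxK // mulVmx // mul1mx.
have e2 : A0 - (A0 + t *: B) = - (t *: B) by rewrite opprD addrA subrr add0r.
rewrite e2 mulmxN mulNmx -scalemxAr -scalemxAl in e.
by rewrite e addrC subrK.
Qed.
Lemma zlem2 (V : zmodType) (a b c d e a' b' c' d' : V) :
  a + b + c + d + e - (a' + b' + c' + d' + e) = (a - a') + (b - b') + (c - c') + (d - d').
Proof.
rewrite opprD addrACA subrr addr0 opprD addrACA; congr (_ + _).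
rewrite opprD addrACA; congr (_ + _).
by rewrite opprD addrACA.
Qed.

Unset Implicit Arguments. Set Strict Implicit.
Section Traj.
Variables (R : realType) (N : nat) (Sp Sq Spq : 'M[R]_N) (sn2 : R) (A0 B A1 B1 : 'M[R]_N).
Hypotheses (hB : psd_mx (block_mx Sp Spq Spq^T Sq)) (hs : 0 <= sn2)
  (uA0 : A0 \in unitmx) (uA1 : A1 \in unitmx)
  (sA0 : A0^T = A0) (sB : B^T = B) (sA1 : A1^T = A1) (sB1 : B1^T = B1).

Let G0 := nbhs (0:R).

Lemma mcv_Fm (R1 X1 : R -> 'M[R]_N) R0 X0 : mcv G0 R1 R0 -> mcv G0 X1 X0 ->
  mcv G0 (fun t => Fm Sp Sq Spq sn2 (R1 t) (X1 t)) (Fm Sp Sq Spq sn2 R0 X0).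
Proof.
move=> hR hX; rewrite /Fm.
have m3 : forall (P Q : R -> 'M[R]_N) P0 Q0 M, mcv G0 P P0 -> mcv G0 Q Q0 ->
    mcv G0 (fun t => P t *m M *m Q t) (P0 *m M *m Q0).
  move=> P Q P0 Q0 M hP hQ; apply: mcv_mul => //; apply: mcv_mul => //; exact: mcv_cst.
apply: mcv_add; last exact: mcv_cst.
apply: mcv_add; last exact: m3.
apply: mcv_add; last exact: m3.
by apply: mcv_add; exact: m3.
Qed.

Lemma mcv_aff (A C : 'M[R]_N) : mcv G0 (fun t => A + t *: C) A.
Proof.
have hc : mcv G0 (fun _ => A) A by exact: mcv_cst.
have hc2 : mcv G0 (fun _ => C) C by exact: mcv_cst.
have hi : (t @[t --> G0] --> (0:R))%classic by exact: cvg_id.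
have := mcv_add hc (mcv_scale hi hc2).
by rewrite scale0r addr0; apply.
Qed.


Let Sg t := Fm Sp Sq Spq sn2 (invmx (A0 + t *: B)) (invmx (A1 + t *: B1)).
Let T0 := Fm Sp Sq Spq sn2 (invmx A0) (invmx A1).
Hypothesis pT : pd_mx T0.

Definition gfun (Shat : 'M[R]_N) (t : R) :=
  if `[< (A0 + t *: B) \in unitmx /\ (A1 + t *: B1) \in unitmx /\ pd_mx (Sg t) >]
  then ln (\det (Sg t)) + \tr (invmx (Sg t) *m Shat) else 0.

Lemma sym_aff (A C : 'M[R]_N) t : A^T = A -> C^T = C -> (invmx (A + t *: C))^T = invmx (A + t *: C).
Proof. by move=> hA hC; rewrite trmx_inv linearD /= linearZ /= hA hC. Qed.

Lemma g_deriv : is_derive (0:R) 1 (gfun T0) 0.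
Proof.
set R0 := invmx A0; set X0 := invmx A1.
pose R1 t := invmx (A0 + t *: B); pose X1 t := invmx (A1 + t *: B1).
pose dR t := R1 t *m B *m R0; pose dX t := X1 t *m B1 *m X0.
pose Gt t := dR t *m Sp *m R1 t + R0 *m Sp *m dR t + (dX t *m Sq *m X1 t + X0 *m Sq *m dX t)
  + (dR t *m Spq *m X1 t + R0 *m Spq *m dX t) + (dX t *m Spq^T *m R1 t + X0 *m Spq^T *m dR t).
have hD : forall t, (A0 + t *: B) \in unitmx -> (A1 + t *: B1) \in unitmx ->
    T0 - Sg t = t *: Gt t.
  move=> t ut vt.
  have eR : R1 t = R0 - t *: dR t := inv_diff uA0 ut.
  have eX : X1 t = X0 - t *: dX t := inv_diff uA1 vt.
  have eR' : R0 = R1 t + t *: dR t by rewrite {1}eR subrK.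
  have eX' : X0 = X1 t + t *: dX t by rewrite {1}eX subrK.
  rewrite -opprB /Sg /T0 /Fm -/(R1 t) -/(X1 t) zlem2.
  rewrite (bil _ eR eR') (bil _ eX eX') (bil _ eR eX') (bil _ eX eR').
  by rewrite -!opprD opprK -!scalerDr.
have cR : mcv G0 R1 R0 by apply: mcv_inv => //; exact: mcv_aff.
have cX : mcv G0 X1 X0 by apply: mcv_inv => //; exact: mcv_aff.
have cS : mcv G0 Sg T0 by exact: mcv_Fm.
have uT := pd_unit pT.
have ciS : mcv G0 (fun t => invmx (Sg t)) (invmx T0) by exact: mcv_inv.
have cdR : mcv G0 dR (R0 *m B *m R0).
  by rewrite /dR; repeat first [exact: cR | apply: mcv_cst | apply: mcv_mul].
have cdX : mcv G0 dX (X0 *m B1 *m X0).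
  by rewrite /dX; repeat first [exact: cX | apply: mcv_cst | apply: mcv_mul].
have [Gl cG] : exists Gl, mcv G0 Gt Gl.
  eexists; rewrite /Gt.
  repeat first [exact: cR | exact: cX | exact: cdR | exact: cdX | apply: mcv_cst | apply: mcv_add | apply: mcv_mul].
apply: (deriv0 (m := fun t => \tr ((invmx (Sg t) - invmx T0) *m Gt t))); last first.
  have h1 : mcv G0 (fun t => invmx (Sg t) - invmx T0) (invmx T0 - invmx T0).
    apply: mcv_add => //; apply: mcv_opp; exact: mcv_cst.
  have := mcv_tr_cvg (mcv_mul h1 cG).
  rewrite subrr mul0mx mxtrace0 => h; apply: h; rewrite /G0; typeclasses eauto.
have dT0 : \det T0 != 0 by rewrite -unitfE -unitmxE.
have dA0 : \det A0 != 0 by rewrite -unitfE -unitmxE.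
have dA1 : \det A1 != 0 by rewrite -unitfE -unitmxE.
have n1 : \forall t \near G0, \det (A0 + t *: B) != 0.
  by apply: (cvgr_neq0 _ (mcv_det (mcv_aff A0 B))).
have n2 : \forall t \near G0, \det (A1 + t *: B1) != 0.
  by apply: (cvgr_neq0 _ (mcv_det (mcv_aff A1 B1))).
have n3 : \forall t \near G0, \det (Sg t) != 0.
  by apply: (cvgr_neq0 _ (mcv_det cS)).
have g0 : gfun T0 0 = ln (\det T0) + N%:R.
  rewrite /gfun /Sg !scale0r !addr0 -/T0 asboolT; last by split.
  by rewrite mulVmx // mxtrace1.
near=> t.
have u1 : (A0 + t *: B) \in unitmx by rewrite unitmxE unitfE; near: t.
have u2 : (A1 + t *: B1) \in unitmx by rewrite unitmxE unitfE; near: t.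
have u3 : Sg t \in unitmx by rewrite unitmxE unitfE; near: t.
have pS : pd_mx (Sg t).
  apply: psd_unit_pd => //; first by apply: Fm_sym => //; apply: sym_aff.
  by apply: Fm_psd => //; apply: sym_aff.
have gt : gfun T0 t = ln (\det (Sg t)) + \tr (invmx (Sg t) *m T0).
  by rewrite /gfun asboolT.
have K1 := key pS pT.
have K2 := key pT pS.
have tE : \tr ((invmx (Sg t) - invmx T0) *m (T0 - Sg t)) =
    (\tr (invmx (Sg t) *m T0) - N%:R) + (\tr (invmx T0 *m Sg t) - N%:R).
  rewrite mulmxBl !mulmxBr mulVmx // mulVmx // !raddfB /= mxtrace1.
  by congr (_ + _); rewrite opprK addrC.
rewrite hD // -scalemxAr mxtraceZ in tE.
rewrite gt g0 tE.
move: K1 K2; generalize (ln (\det (Sg t))) (ln (\det T0)) (\tr (invmx (Sg t) *m T0)) (\tr (invmx T0 *m Sg t)).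
move=> a b c d K1 K2; apply/andP; split; lra.
Unshelve. all: by end_near.
Qed.

End Traj.

End Helpers.
Import Helpers.

Lemma sym_rank1 (R : realType) N (a : 'cV[R]_N) : (a *m a^T)^T = a *m a^T.
Proof. by rewrite trmx_mul trmxK. Qed.

Lemma sum_delta (R : realType) N Le (bo : 'rV[R]_Le) (r : 'I_Le -> R) (M : 'I_Le -> 'M[R]_N) l t :
  \sum_(k < Le) ((bo + t *: delta_mx 0 l) 0 k / r k) *: M k =
  \sum_(k < Le) (bo 0 k / r k) *: M k + t *: ((r l)^-1 *: M l).
Proof.
transitivity (\sum_(k < Le) ((bo 0 k / r k) *: M k + (t * (delta_mx 0 l : 'rV[R]_Le) 0 k / r k) *: M k)).
  by apply: eq_bigr => k _; rewrite !mxE -scalerDl mulrDl.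
rewrite big_split /=; congr (_ + _).
rewrite (bigD1 l) //= big1 ?addr0 => [|k kl].
  by rewrite !mxE !eqxx /= mulr1 scalerA.
by rewrite !mxE eqxx /= (negbTE kl) mulr0 mul0r scale0r.
Qed.

Theorem lemma2 (R : realType) (N Le : nat) (a : 'I_Le -> 'cV[R]_N)
  (r x : 'I_Le -> R) (Sp Sq Spq : 'M[R]_N) (sn2 : R) (L : nat)
  (bo : 'rV[R]_Le) :
  (0 < N)%N -> (0 < L)%N ->
  (forall l, 0 < r l) -> (forall l, 0 < x l) ->
  0 <= sn2 ->
  psd_mx (block_mx Sp Spq Spq^T Sq) ->
  (forall l, bo 0 l = 0 \/ bo 0 l = 1) ->
  \sum_(l < Le) bo 0 l = L%:R ->
  f_defined a r x Sp Sq Spq sn2 bo ->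
  let f := f_obj a r x Sp Sq Spq sn2 (Sigma_b a r x Sp Sq Spq sn2 bo) in
  (* gradient vanishes: every partial derivative of f at bo is 0 *)
  (forall l : 'I_Le,
     is_derive (0 : R) 1 (fun t : R => f (bo + t *: delta_mx 0 l)) 0) /\
  (* global minimality over the binary feasible set *)
  (forall b : 'rV[R]_Le,
     (forall l, b 0 l = 0 \/ b 0 l = 1) -> \sum_(l < Le) b 0 l = L%:R ->
     f_defined a r x Sp Sq Spq sn2 b -> f bo <= f b) /\
  (* global minimality over the relaxed feasible set *)
  (forall b : 'rV[R]_Le,
     (forall l, 0 <= b 0 l <= 1) -> \sum_(l < Le) b 0 l = L%:R ->
     f_defined a r x Sp Sq Spq sn2 b -> f bo <= f b).
Proof.
move=> N0 L0 rp xp hs hB hbo sbo dbo f.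
have [uA0 [uA1 pT]] := dbo.
set T0 := Sigma_b a r x Sp Sq Spq sn2 bo.
have fE : forall b, f_defined a r x Sp Sq Spq sn2 b ->
    f b = ln (\det (Sigma_b a r x Sp Sq Spq sn2 b)) + \tr (invmx (Sigma_b a r x Sp Sq Spq sn2 b) *m T0).
  by move=> b db; rewrite /f /f_obj asboolT.
have fbo : f bo = ln (\det T0) + N%:R by rewrite fE // mulVmx ?mxtrace1 // pd_unit.
have minf : forall b, f_defined a r x Sp Sq Spq sn2 b -> f bo <= f b.
  by move=> b db; rewrite fbo fE //; exact: key db.2.2 pT.
split; last by split => b _ _ db; exact: minf.
move=> l.
pose BR : 'M[R]_N := 2^-1 *: ((r l)^-1 *: (a l *m (a l)^T)).
pose BX : 'M[R]_N := 2^-1 *: ((x l)^-1 *: (a l *m (a l)^T)).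
have RE : forall t, Rinv_b a r (bo + t *: delta_mx 0 l) = Rinv_b a r bo + t *: BR.
  by move=> t; rewrite /Rinv_b sum_delta scalerDr /BR !scalerA [2^-1 * t]mulrC mulrA.
have XE : forall t, Xinv_b a x (bo + t *: delta_mx 0 l) = Xinv_b a x bo + t *: BX.
  by move=> t; rewrite /Xinv_b sum_delta scalerDr /BX !scalerA [2^-1 * t]mulrC mulrA.
have symS : forall (c : 'I_Le -> R), (2^-1 *: \sum_(k < Le) c k *: (a k *m (a k)^T))^T
    = 2^-1 *: \sum_(k < Le) c k *: (a k *m (a k)^T).
  move=> c; rewrite linearZ /= linear_sum /=; congr (_ *: _).
  by apply: eq_bigr => k _; rewrite linearZ /= sym_rank1.
have sA0 : (Rinv_b a r bo)^T = Rinv_b a r bo by rewrite /Rinv_b (symS (fun k => bo 0 k / r k)).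
have sA1 : (Xinv_b a x bo)^T = Xinv_b a x bo by rewrite /Xinv_b (symS (fun k => bo 0 k / x k)).
have sB : BR^T = BR.
  by rewrite /BR linearZ /= linearZ /= sym_rank1.
have sB1 : BX^T = BX by rewrite /BX linearZ /= linearZ /= sym_rank1.
have -> : (fun t : R => f (bo + t *: delta_mx 0 l)) =
    gfun R N Sp Sq Spq sn2 (Rinv_b a r bo) BR (Xinv_b a x bo) BX T0.
  by apply: funext => t; rewrite /f /f_obj /f_defined /Sigma_b RE XE.
exact: (@g_deriv R N Sp Sq Spq sn2 _ _ _ _ hB hs uA0 uA1 sA0 sB sA1 sB1 pT).
Qed.
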